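(* Let $f=(f_{\{i,j\}})_{j\ge i\ge-1}$ be any element of the $\mathrm{fin}_2(\mathbb{N})$-simplex, let $X_1,X_2,\dots$ be i.i.d. with $\mathrm{pr}(X_k=\{i,j\}\mid f)=f_{\{i,j\}}$, and let $\mathcal{Y}=\mathcal{E}_{\mathcal{X}}$ be the edge-labeled network induced by the selection function $\mathcal{X}:\mathbb{N}\to\mathrm{fin}_2(\mathbb{Z})$ constructed from $X_1,X_2,\dots$. Then $\mathcal{Y}$ is edge exchangeable.
   Context: $\mathrm{fin}_2(\mathcal{P})$ is the set of size-2 multisets $\{i,j\}$ of $\mathcal{P}$ (undirected edges, loops allowed). An interaction process $\mathcal{I}:S\to\mathrm{fin}_2(\mathcal{P})$ ($S\subseteq\mathbb{N}$) induces the edge-labeled network $\mathcal{E}_{\mathcal{I}}$, the equivalence class of $\mathcal{I}$ under relabeling vertices by bijections of the population, keeping edge labels in $S$. For a permutation $\sigma$ of $S$, $\mathcal{E}^\sigma$ is induced by $\mathcal{I}^\sigma(i)=\mathcal{I}(\sigma^{-1}(i))$; a random edge-labeled network $\mathcal{Y}$ is edge exchangeable if $\mathcal{Y}^\sigma$ has the same law as $\mathcal{Y}$ for all permutations $\sigma$ of $S$. The $\mathrm{fin}_2(\mathbb{N})$-simplex is the set of $(f_{\{i,j\}})_{j\ge i\ge-1}$ (indices in $\{-1,0,1,2,\dots\}$) with $f_{\{i,j\}}\ge0$, $f_{\{-1,i\}}=0$ for all $i\ne0$, and $\sum_{j\ge i\ge-1}f_{\{i,j\}}=1$. Construction of $\mathcal{X}$: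 set $m_0=0$. For $n\ge1$ with $m_{n-1}=z\le0$: if $X_n$ contains neither $0$ nor $-1$, put $\mathcal{X}(n)=X_n$, $m_n=z$; if $X_n=\{0,j\}$ with $j\ge1$, put $\mathcal{X}(n)=\{z-1,j\}$, $m_n=z-1$; if $X_n=\{0,0\}$, put $\mathcal{X}(n)=\{z-1,z-1\}$, $m_n=z-1$; if $X_n=\{-1,0\}$, put $\mathcal{X}(n)=\{z-1,z-2\}$, $m_n=z-2$. (Thus events involving $0$ or $-1$ create fresh vertices that never reappear.) *)

(* Defs.v *)
From HB Require Import structures.
From mathcomp Require Import all_boot all_order all_algebra.
From mathcomp Require Import all_classical all_reals all_analysis.
Set Implicit Arguments. Unset Strict Implicit. Unset Printing Implicit Defensive.
Import Order.TTheory GRing.Theory Num.Theory.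
Local Open Scope classical_set_scope.
Local Open Scope ring_scope.

(* A size-2 multiset {i,j} of integers is represented by the ordered pair
   (min i j, max i j).  [mk2 a b] is the multiset {a,b}. *)
Definition mk2 (a b : int) : int * int := (Order.min a b, Order.max a b).

Definition fin2_dom (p : int * int) : Prop := (-1 <= p.1)%R /\ (p.1 <= p.2)%R.

Definition in_fin2_simplex (R : realType) (f : int * int -> R) : Prop :=
  (forall p, fin2_dom p -> 0 <= f p) /\
  (forall i : int, (-1 <= i)%R -> i != 0 -> f (-1, i) = 0) /\
  (\esum_(p in fin2_dom) (f p)%:E = 1%E).

(* Interaction processes with label set S = N (indexed from 0) and
   population Z. *)
Definition iproc := nat -> int * int.

Definition relabel (phi : int -> int) (I : iproc) : iproc :=
  fun n => mk2 (phi (I n).1) (phi (I n).2).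

(* I and J induce the same edge-labeled network: they differ by a
   bijective relabeling of the population (edges compared as multisets). *)
Definition same_network (I J : iproc) : Prop :=
  exists phi : int -> int, bijective phi /\
    forall n, mk2 (phi (I n).1) (phi (I n).2) = mk2 (J n).1 (J n).2.

(* Product sigma-algebra on interaction processes: generated by the
   cylinder sets {I | I n = v}. *)
Definition cylinders : set (set iproc) :=
  [set C | exists n v, C = [set I : iproc | I n = v]].

Definition iproc_measurable (A : set iproc) : Prop := <<s cylinders >> A.

(* Measurable sets of edge-labeled networks = measurable sets of processes
   that are invariant under relabeling (quotient sigma-algebra). *)
Definition network_event (A : set iproc) : Prop :=
  iproc_measurable A /\ forall I J, same_network I J -> (A I <-> A J).

(* One step of the construction of the selection function X-cal:
   given the current value z = m_{n-1} and X_n = x, returns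
   (X-cal(n), m_n). *)
Definition step (z : int) (x : int * int) : (int * int) * int :=
  if (x.1 != 0) && (x.1 != -1) && (x.2 != 0) && (x.2 != -1) then (x, z)
  else if (x.1 == 0) && (1 <= x.2)%R then (mk2 (z - 1) x.2, z - 1)
  else if (x.1 == 0) && (x.2 == 0) then (mk2 (z - 1) (z - 1), z - 1)
  else if (x.1 == -1) && (x.2 == 0) then (mk2 (z - 1) (z - 2), z - 2)
  else (x, z) (* unreachable for values in the support *).

(* m_n, with x k standing for X_{k+1} *)
Fixpoint mstate (x : nat -> int * int) (n : nat) : int :=
  match n with
  | 0 => 0
  | n'.+1 => (step (mstate x n') (x n')).2
  end.

(* calX x n is X-cal(n+1) *)
Definition calX (x : nat -> int * int) : iproc :=
  fun n => (step (mstate x n) (x n)).1.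

Definition mutually_independent d (T : measurableType d) (R : realType)
  (P : probability T R) (X : nat -> T -> int * int) : Prop :=
  forall (s : seq nat) (v : nat -> int * int), uniq s ->
    P (\bigcap_(k in [set` s]) (X k @^-1` [set v k])) =
    (\prod_(k <- s) P (X k @^-1` [set v k]))%E.

(* Main.v *)
Require Import Defs.
From HB Require Import structures.
From mathcomp Require Import all_boot all_order all_algebra.
From mathcomp Require Import all_classical all_reals all_analysis.
From mathcomp Require Import zify.
Import Order.TTheory GRing.Theory Num.Theory.
Local Open Scope classical_set_scope.
Local Open Scope ring_scope.
Set Implicit Arguments. Unset Strict Implicit.
Definition good (p : int * int) : bool :=
  [|| (1 <= p.1) && (p.1 <= p.2), (p.1 == 0) && (0 <= p.2) | p == (-1, 0)].

Definition wt (p : int * int) : int :=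
  if p.1 == 0 then 1 else if p.1 == -1 then 2 else 0.

Lemma wt_ge0 p : 0 <= wt p.
Proof. rewrite /wt; case: ifP => //; case: ifP => //. Qed.

Lemma step2 z p : good p -> (step z p).2 = z - wt p.
Proof.
case: p => a b; rewrite /good /wt /step /=.
move=> /or3P[/andP[h1 h2]|/andP[/eqP -> h2]|/eqP [-> ->]].
- have -> : (a != 0) && (a != -1) && (b != 0) && (b != -1) by lia.
  have -> : (a == 0) = false by lia. have -> : (a == -1) = false by lia.
  simpl; lia.
- rewrite /=. have [->|bn0] := eqVneq b 0; first by simpl; lia.
  have -> : (1 <= b) by lia. simpl; lia.
- simpl; lia.
Qed.

Lemma mstateS x n : mstate x n.+1 = (step (mstate x n) (x n)).2.
Proof. by []. Qed.

Section Comb.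
Variable x : nat -> int * int.
Hypothesis gx : forall n, good (x n).
Notation M := (mstate x).

Lemma MS n : M n.+1 = M n - wt (x n).
Proof. by rewrite mstateS step2. Qed.

Lemma M0 : M 0 = 0. Proof. by []. Qed.

Lemma M_noninc n m : (n <= m)%N -> M m <= M n.
Proof.
move=> /subnK <-; elim: (m - n)%N => [|k IH] //.
rewrite addSn MS; have := wt_ge0 (x (k + n)%N); lia.
Qed.

Lemma M_le0 n : M n <= 0.
Proof. exact: (@M_noninc 0 n (leq0n n)). Qed.

Definition used (l : int) := exists n (o : int), 0 <= o < wt (x n) /\ l = M n - 1 - o.

Lemma used_neg l : used l -> l < 0.
Proof. move=> [n [oo [ho ->]]]; have := M_le0 n; lia. Qed.

Lemma used_uniq n o n' o' : 0 <= o < wt (x n) -> 0 <= o' < wt (x n') ->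
  M n - 1 - o = M n' - 1 - o' -> n = n' /\ o = o'.
Proof.
move=> ho ho' e.
have key : forall a b oa ob, 0 <= oa < wt (x a) -> 0 <= ob < wt (x b) ->
   M a - 1 - oa = M b - 1 - ob -> (a < b)%N -> False.
  move=> a b oa ob ha hb eab ab.
  have h1 := @M_noninc a.+1 b ab. rewrite MS in h1. lia.
case: (ltngtP n n') => [c|c|c].
- by case: (key _ _ _ _ ho ho' e c).
- by case: (key _ _ _ _ ho' ho (esym e) c).
- subst; split => //; lia.
Qed.

Lemma used_iff l : l < 0 -> used l <-> exists n, M n <= l.
Proof.
move=> hl; split.
  move=> [n [oo [ho ->]]]; exists n.+1; rewrite MS; lia.
move=> [n]; elim: n => [|n IH]; first by rewrite M0; lia.
have [h|h] := leP (M n) l; first by move=> _; exact: IH.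
move=> h2; exists n, (M n - 1 - l); split; last lia.
rewrite MS in h2; lia.
Qed.

End Comb.

Definition Rel (x y : nat -> int * int) (s : nat -> nat) (Lx Ly l l' : int) : Prop :=
  (0 <= l /\ l' = l) \/
  (exists n (o : int), 0 <= o < wt (x n) /\ l = mstate x n - 1 - o /\
        l' = mstate y (s n) - 1 - o) \/
  (l < 0 /\ ~ used x l /\ l' = l - Lx + Ly).

Definition HLprop (x y : nat -> int * int) (Lx Ly : int) : Prop :=
  forall l, l < 0 -> ~ used x l -> l - Lx + Ly < 0 /\ ~ used y (l - Lx + Ly).

Lemma Rel_total x y s Lx Ly l : exists l', Rel x y s Lx Ly l l'.
Proof.
have [h|h] := leP 0 l; first by exists l; left.
have [[n [oo [ho e]]]|nu] := pselect (used x l).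
  by exists (mstate y (s n) - 1 - oo); right; left; exists n, oo.
by exists (l - Lx + Ly); right; right.
Qed.

Lemma Rel_func x y s Lx Ly l a b : (forall n, good (x n)) ->
  Rel x y s Lx Ly l a -> Rel x y s Lx Ly l b -> a = b.
Proof.
move=> gx.
have un : forall n o, 0 <= o < wt (x n) -> l = mstate x n - 1 - o -> l < 0.
  by move=> n o ho e; apply: (used_neg gx); exists n, o.
case=> [[h1 ->]|[[n [oo [ho [e1 ->]]]]|[h1 [h2 ->]]]];
case=> [[h1' ->]|[[n' [oo' [ho' [e1' ->]]]]|[h1' [h2' ->]]]] //.
- by have := un _ _ ho' e1'; lia.
- by lia.
- by have := un _ _ ho e1; lia.
- have [<- <-] := used_uniq gx ho ho' (etrans (esym e1) e1'). by [].
- by exfalso; apply: h2'; exists n, oo.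
- by lia.
- by exfalso; apply: h2; exists n', oo'.
Qed.

Lemma Rel_sym x y s t Lx Ly l l' : (forall i, y i = x (t i)) -> cancel s t ->
  HLprop x y Lx Ly -> Rel x y s Lx Ly l l' -> Rel y x t Ly Lx l' l.
Proof.
move=> hy st hl.
case=> [[h1 ->]|[[n [oo [ho [e1 ->]]]]|[h1 [h2 ->]]]].
- by left.
- right; left; exists (s n), oo; rewrite hy st; split => //.
- right; right; have [a b] := hl l h1 h2; split => //; split => //; lia.
Qed.

Lemma relabel_exists x y s t Lx Ly : (forall n, good (x n)) ->
  (forall i, y i = x (t i)) -> cancel s t -> cancel t s ->
  HLprop x y Lx Ly -> HLprop y x Ly Lx ->
  exists phi : int -> int, bijective phi /\ (forall l, 0 <= l -> phi l = l) /\
    (forall n (o : int), 0 <= o < wt (x n) ->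
        phi (mstate x n - 1 - o) = mstate y (s n) - 1 - o).
Proof.
move=> gx hy st ts hl hl'.
have hx : forall i, x i = y (s i) by move=> i; rewrite hy st.
have gy : forall i, good (y i) by move=> i; rewrite hy.
have [phi hphi] := choice (Rel_total x y s Lx Ly).
have [psi hpsi] := choice (Rel_total y x t Ly Lx).
exists phi; split; [|split].
- exists psi => l.
    apply: (Rel_func gy (hpsi (phi l))).
    exact: (Rel_sym hy st hl (hphi l)).
  apply: (Rel_func gx (hphi (psi l))).
  exact: (Rel_sym hx ts hl' (hpsi l)).
- move=> l hl0; apply: (Rel_func gx (hphi l)); by left.
- move=> n o ho; apply: (Rel_func gx (hphi _)); right; left; by exists n, o.
Qed.

Definition Bnd (x : nat -> int * int) := exists L, forall n, L <= mstate x n.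

Lemma min_attained x : (forall n, good (x n)) -> Bnd x ->
  exists N, forall n, mstate x N <= mstate x n.
Proof.
move=> gx [L hL]; apply: contrapT => hno.
have hdec : forall N, exists n, mstate x n < mstate x N.
  move=> N; apply: contrapT => hh; apply: hno; exists N => n.
  have [//|lt] := leP (mstate x N) (mstate x n).
  by exfalso; apply: hh; exists n.
have hk : forall k : nat, exists n, mstate x n <= - (k%:Z).
  elim=> [|k [n hn]]; first by exists 0%N.
  have [n' hn'] := hdec n; exists n'; lia.
have [n hn] := hk (`|L|.+1)%N.
have := hL n; lia.
Qed.

Lemma min_wt0 x N : (forall n, good (x n)) -> (forall n, mstate x N <= mstate x n) ->
  forall n, (N <= n)%N -> wt (x n) = 0.
Proof.
move=> gx hN n hn.
have h1 := hN n.+1. have h2 := M_noninc gx hn. rewrite MS // in h1.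
have := wt_ge0 (x n); lia.
Qed.

Lemma bound_image (s : nat -> nat) N : exists K, forall k, (k < N)%N -> (s k < K)%N.
Proof.
elim: N => [|N [K hK]]; first by exists 0%N.
exists (maxn K (s N).+1) => k; rewrite ltnS leq_eqVlt => /orP[/eqP ->|hk].
  by rewrite leq_max leqnn orbT.
by rewrite leq_max hK.
Qed.

Lemma wt0_Bnd y K : (forall n, good (y n)) -> (forall i, (K <= i)%N -> wt (y i) = 0) -> Bnd y.
Proof.
move=> gy hK; exists (mstate y K) => i.
have [hi|hi] := leqP i K; first exact: M_noninc.
have e : forall j, mstate y (j + K) = mstate y K.
  elim=> [//|j IH]; rewrite addSn MS // IH hK ?leq_addl //; lia.
by rewrite -(subnK (ltnW hi)) e.
Qed.

Lemma Bnd_transfer x y s t : (forall n, good (x n)) ->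
  (forall i, y i = x (t i)) -> cancel t s -> Bnd x -> Bnd y.
Proof.
move=> gx hy ts bx.
have gy : forall i, good (y i) by move=> i; rewrite hy.
have [N hN] := min_attained gx bx.
have [K hK] := bound_image s N.
apply: (wt0_Bnd gy (K := K)) => i hi; rewrite hy.
apply: (min_wt0 gx hN); rewrite leqNgt; apply/negP => hti.
have := hK _ hti; rewrite ts => hiK.
by move: hi; rewrite leqNgt hiK.
Qed.

Lemma notBnd_used x : (forall n, good (x n)) -> ~ Bnd x -> forall l, l < 0 -> used x l.
Proof.
move=> gx nb l hl; apply/(used_iff gx hl); apply: contrapT => hh; apply: nb.
exists l => n; have [//|lt] := leP l (mstate x n).
by exfalso; apply: hh; exists n; lia.
Qed.

Lemma HL_Bnd x y : (forall n, good (x n)) -> (forall n, good (y n)) ->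
  forall Nx Ny, (forall n, mstate x Nx <= mstate x n) -> (forall n, mstate y Ny <= mstate y n) ->
  HLprop x y (mstate x Nx) (mstate y Ny).
Proof.
move=> gx gy Nx Ny hx hy l hl nu.
have hlx : l < mstate x Nx.
  have [lt|le] := ltP l (mstate x Nx) => //.
  by exfalso; apply: nu; apply/(used_iff gx hl); exists Nx.
have hy0 := hy 0%N; rewrite M0 in hy0.
split; first lia.
move=> /(used_iff gy) [|n hn]; first lia.
have := hy n; lia.
Qed.

Lemma HL_exist x y s t : (forall n, good (x n)) ->
  (forall i, y i = x (t i)) -> cancel s t -> cancel t s ->
  exists Lx Ly, HLprop x y Lx Ly /\ HLprop y x Ly Lx.
Proof.
move=> gx hy st ts.
have hx : forall i, x i = y (s i) by move=> i; rewrite hy st.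
have gy : forall i, good (y i) by move=> i; rewrite hy.
have [bx|nbx] := pselect (Bnd x).
  have by_ := Bnd_transfer gx hy ts bx.
  have [Nx hNx] := min_attained gx bx.
  have [Ny hNy] := min_attained gy by_.
  exists (mstate x Nx), (mstate y Ny); split; exact: HL_Bnd.
have nby : ~ Bnd y by move=> /(Bnd_transfer gy hx st).
exists 0, 0; split => l hl nu; exfalso; apply: nu.
  exact: notBnd_used.
exact: notBnd_used.
Qed.

Lemma step1 z p : good p -> (step z p).1 =
  if 1 <= p.1 then p else if p.1 == 0 then
    (if p.2 == 0 then mk2 (z - 1) (z - 1) else mk2 (z - 1) p.2)
  else mk2 (z - 1) (z - 2).
Proof.
case: p => a b; rewrite /good /step /=.
move=> /or3P[/andP[h1 h2]|/andP[/eqP -> h2]|/eqP [-> ->]].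
- have -> : (a != 0) && (a != -1) && (b != 0) && (b != -1) by lia.
  by rewrite h1.
- rewrite /=. have [->|bn0] := eqVneq b 0; first by [].
  have -> : (1 <= b) by lia. by [].
- by [].
Qed.

Lemma mk2_map (g : int -> int) a b :
  mk2 (g (mk2 a b).1) (g (mk2 a b).2) = mk2 (g a) (g b).
Proof.
rewrite /mk2; have [h|h] := leP a b => //=.
- have -> : Order.min (g b) (g a) = Order.min (g a) (g b) by lia.
  by have -> : Order.max (g b) (g a) = Order.max (g a) (g b) by lia.
Qed.

Lemma mk2_id a b : mk2 (mk2 a b).1 (mk2 a b).2 = mk2 a b.
Proof. exact: (mk2_map id). Qed.

Lemma mk2_ord (p : int * int) : p.1 <= p.2 -> mk2 p.1 p.2 = p.
Proof. case: p => a b /= h; rewrite /mk2.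
have -> : Order.min a b = a by lia.
by have -> : Order.max a b = b by lia. Qed.

Lemma net_perm x s t : (forall n, good (x n)) -> cancel s t -> cancel t s ->
  same_network (fun i => calX x (t i)) (calX (fun i => x (t i))).
Proof.
move=> gx st ts.
set y := fun i => x (t i).
have hy : forall i, y i = x (t i) by [].
have [Lx [Ly [hl hl']]] := HL_exist gx hy st ts.
have [phi [bphi [hpos hneg]]] := relabel_exists gx hy st ts hl hl'.
exists phi; split => // i.
suff key : forall n, mk2 (phi (calX x n).1) (phi (calX x n).2) =
    mk2 (calX y (s n)).1 (calX y (s n)).2 by rewrite key ts.
move=> n; rewrite /calX (hy (s n)) st (step1 _ (gx n)) (step1 _ (gx n)).
have hn := hneg n; have gn := gx n.
case E: (x n) hn gn => [a b] hn; rewrite /good /wt /= in hn *.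
move=> /or3P[/andP[h1 h2]|/andP[/eqP ha h2]|/eqP [ha hb]].
- rewrite h1 /= !hpos //; lia.
- have -> : (1 <= a) = false by lia. rewrite ha eqxx /= in hn *.
  have h0 : phi (mstate x n - 1) = mstate y (s n) - 1.
    by have := hn 0; rewrite !subr0; apply; lia.
  case: (eqVneq b 0) => hb.
  + by rewrite mk2_map h0 mk2_id.
  + by rewrite mk2_map h0 hpos ?mk2_id //; lia.
- rewrite ha hb /= in hn *.
  have h0 : phi (mstate x n - 1) = mstate y (s n) - 1.
    by have := hn 0; rewrite !subr0; apply; lia.
  have h1 : phi (mstate x n - 2) = mstate y (s n) - 2.
    have := hn 1; rewrite -!addrA -!opprD; apply; lia.
  by rewrite mk2_map h0 h1 mk2_id.
Qed.

HB.instance Definition _ := isPointed.Build int 0%R.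
Definition MI := g_sigma_algebraType cylinders.

Lemma cylinder_meas n v : measurable ([set I : iproc | I n = v] : set MI).
Proof. apply: sub_gen_smallest; by exists n, v. Qed.

Lemma const_meas d (T' : measurableType d) (P : Prop) : measurable [set _ : T' | P].
Proof.
have [p|np] := pselect P.
  by rewrite (_ : [set _ | P] = setT) //; apply/seteqP; split.
by rewrite (_ : [set _ | P] = set0) //; apply/seteqP; split.
Qed.

Section CoordMeas.
Context d (T' : measurableType d) (Y : nat -> T' -> int * int).
Hypothesis hY : forall k v, measurable (Y k @^-1` [set v]).

Lemma mstate_meas n z : measurable [set w | mstate (fun k => Y k w) n = z].
Proof.
elim: n z => [|n IH] z; first exact: (const_meas _ (0 = z)).
rewrite (_ : [set w | _] = \bigcup_(q : int * (int * int))
   ([set w | mstate (fun k => Y k w) n = q.1] `&` (Y n @^-1` [set q.2]) `&`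
    [set _ | (step q.1 q.2).2 = z])).
  apply: countable_bigcupT_measurable; first exact: countableP.
  move=> q; apply: measurableI; first apply: measurableI.
  - exact: IH.
  - exact: hY.
  - exact: const_meas.
apply/seteqP; split => w /=.
  by move=> h; exists (mstate (fun k => Y k w) n, Y n w).
by move=> [[a b] _ /= [[<- <-] <-]].
Qed.

Lemma calX_meas n v : measurable [set w | calX (fun k => Y k w) n = v].
Proof.
rewrite (_ : [set w | _] = \bigcup_(q : int * (int * int))
   ([set w | mstate (fun k => Y k w) n = q.1] `&` (Y n @^-1` [set q.2]) `&`
    [set _ | (step q.1 q.2).1 = v])).
  apply: countable_bigcupT_measurable; first exact: countableP.
  move=> q; apply: measurableI; first apply: measurableI.
  - exact: mstate_meas.
  - exact: hY.
  - exact: const_meas.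
apply/seteqP; split => w /=.
  by move=> h; exists (mstate (fun k => Y k w) n, Y n w).
by move=> [[a b] _ /= [[<- <-] <-]].
Qed.

End CoordMeas.

Lemma meas_fun_of d (T' : measurableType d) (Phi : T' -> MI) :
  (forall n v, measurable [set w | Phi w n = v]) -> measurable_fun setT Phi.
Proof.
move=> h; apply: (@measurability _ _ _ _ setT Phi cylinders) => //.
move=> _ [B [n [v ->]] <-]; rewrite setTI; exact: h.
Qed.

Lemma calX_measfun : measurable_fun setT (calX : MI -> MI).
Proof.
apply: meas_fun_of => n v.
apply: (@calX_meas _ MI (fun k (y : MI) => y k)) => k u.
exact: cylinder_meas.
Qed.

Definition cyl (s : seq nat) (v : nat -> int * int) : set iproc :=
  [set I | forall k, k \in s -> I k = v k].

Lemma cyl_meas s v : measurable (cyl s v : set MI).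
Proof.
elim: s => [|k s IH].
  by rewrite (_ : cyl [::] v = setT) //; apply/seteqP; split => // I _ k.
rewrite (_ : cyl (k :: s) v = [set I | I k = v k] `&` cyl s v).
  by apply: measurableI => //; exact: cylinder_meas.
apply/seteqP; split => I.
  by move=> h; split; [apply: h; rewrite inE eqxx|move=> j js; apply: h; rewrite inE js orbT].
by move=> [h1 h2] j; rewrite inE => /orP[/eqP ->|/h2].
Qed.

Definition Gpi : set (set iproc) :=
  [set C | C = set0 \/ exists s v, C = cyl s v].

Lemma Gpi_setI : setI_closed Gpi.
Proof.
move=> A B [->|[s1 [v1 ->]]]; first by left; rewrite set0I.
move=> [->|[s2 [v2 ->]]]; first by left; rewrite setI0.
have [[k [k1 [k2 nk]]]|nc] := pselect (exists k, k \in s1 /\ k \in s2 /\ v1 k <> v2 k).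
  left; apply/seteqP; split => // I [h1 h2]; apply: nk.
  by rewrite -(h1 _ k1) -(h2 _ k2).
right; exists (s1 ++ s2), (fun k => if k \in s1 then v1 k else v2 k).
apply/seteqP; split => I.
  move=> [h1 h2] k; rewrite mem_cat; case: ifP => [/h1 //|_ /= /h2 //].
move=> h; split => k hk.
  by have := h k; rewrite mem_cat hk /=; apply.
have := h k; rewrite mem_cat hk orbT; case: ifP => [k1|_]; last by apply.
move=> e; rewrite e //; apply: contrapT => ne; apply: nc; exists k; split => //.
Qed.

Section Law.
Context (R : realType) (f : int * int -> R)
  (d : measure_display) (T : measurableType d) (P : probability T R)
  (X : nat -> T -> int * int)
  (hXmeas : forall k v, measurable (X k @^-1` [set v]))
  (hXdom : forall k w, fin2_dom (X k w))
  (hXlaw : forall k p, fin2_dom p -> P (X k @^-1` [set p]) = (f p)%:E)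
  (hXind : mutually_independent P X)
  (s sinv : nat -> nat) (hs : cancel s sinv) (hsi : cancel sinv s).

Definition Psi (w : T) : MI := fun k => X k w.
Definition Psis (w : T) : MI := fun k => X (sinv k) w.

Lemma Psi_meas : measurable_fun setT Psi.
Proof. apply: meas_fun_of => n v; exact: hXmeas. Qed.

Lemma Psis_meas : measurable_fun setT Psis.
Proof. apply: meas_fun_of => n v; exact: hXmeas. Qed.

Lemma pre_meas (g : T -> MI) (B : set MI) : measurable_fun setT g -> measurable B ->
  measurable (g @^-1` B).
Proof. by move=> mg mB; rewrite -[_ @^-1` _]setTI; apply: mg. Qed.

Lemma marg k p : P (X k @^-1` [set p]) = P (X 0 @^-1` [set p]).
Proof.
have [dp|ndp] := pselect (fin2_dom p); first by rewrite !hXlaw.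
have e : forall j, X j @^-1` [set p] = set0.
  by move=> j; apply/seteqP; split => // w /= h; apply: ndp; rewrite -h.
by rewrite !e.
Qed.

Lemma cyl_law sq v : P (Psi @^-1` cyl sq v) = P (Psis @^-1` cyl sq v).
Proof.
have eu : forall (g : T -> MI), g @^-1` cyl sq v = g @^-1` cyl (undup sq) v.
  by move=> g; apply/seteqP; split => w h k; [rewrite mem_undup|rewrite -mem_undup]; apply: h.
rewrite (eu Psi) (eu Psis).
have uq := undup_uniq sq; set q := undup sq in uq *.
have e1 : Psi @^-1` cyl q v = \bigcap_(k in [set` q]) (X k @^-1` [set v k]).
  by apply/seteqP; split => w h k; apply: h.
have e2 : Psis @^-1` cyl q v =
    \bigcap_(j in [set` map sinv q]) (X j @^-1` [set (v \o s) j]).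
  apply/seteqP; split => w h.
    move=> j /= /mapP [k kq ->]; rewrite hsi; exact: h.
  move=> k kq; have := h (sinv k); rewrite /= hsi; apply.
  by apply/mapP; exists k.
rewrite e1 e2 !hXind //; last by rewrite map_inj_uniq //; exact: can_inj hsi.
rewrite big_map; apply: eq_bigr => k _ /=; rewrite hsi.
by rewrite (marg (sinv k)) marg.
Qed.

Definition Hsys : set (set iproc) :=
  [set B | measurable (B : set MI) /\ P (Psi @^-1` B) = P (Psis @^-1` B)].

Lemma Pfin (A : set T) : measurable A -> (P A < +oo)%E.
Proof. by move=> mA; apply: (le_lt_trans (probability_le1 P mA)); exact: ltry. Qed.

Lemma Hsys_lambda : lambda_system setT Hsys.
Proof.
split.
- by [].
- split => //; by rewrite !preimage_setT.
- move=> A B BA [mA eA] [mB eB]; split; first exact: measurableD.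
  have key : forall g : T -> MI, measurable_fun setT g ->
      P (g @^-1` (A `\` B)) = (P (g @^-1` A) - P (g @^-1` B))%E.
    move=> g mg.
    rewrite (_ : g @^-1` (A `\` B) = g @^-1` A `\` g @^-1` B) //.
    rewrite measureD; try exact: pre_meas; last exact/Pfin/pre_meas.
    by rewrite setIidr // => w /= /BA.
  by rewrite (key _ Psi_meas) (key _ Psis_meas) eA eB.
- move=> F nd hF; split.
    by apply: bigcupT_measurable => i; case: (hF i).
  have key : forall g : T -> MI, measurable_fun setT g ->
      (P \o (fun i => g @^-1` F i)) @ \oo --> P (g @^-1` \bigcup_i F i).
    move=> g mg; rewrite preimage_bigcup.
    apply: nondecreasing_cvg_mu.
    - by move=> i; apply: pre_meas => //; case: (hF i).
    - rewrite -preimage_bigcup; apply: pre_meas => //.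
      by apply: bigcupT_measurable => i; case: (hF i).
    - move=> n m nm; have := nd n m nm; rewrite !subsetEset => h w /=; exact: h.
  have h1 := key _ Psi_meas; have h2 := key _ Psis_meas.
  have ee : (P \o (fun i => Psi @^-1` F i)) = (P \o (fun i => Psis @^-1` F i)).
    by apply: funext => i /=; case: (hF i).
  rewrite ee in h1.
  exact: (cvg_unique _ h1 h2).
Qed.

Lemma law_eq (B : set MI) : measurable B -> P (Psi @^-1` B) = P (Psis @^-1` B).
Proof.
move=> mB.
have sub : <<s setT, Gpi >> `<=` Hsys.
  apply: lambda_system_subset => //.
  - exact: Gpi_setI.
  - exact: Hsys_lambda.
  - move=> C [->|[sq [v ->]]].
      by split => //; rewrite !preimage_set0.
    split; [exact: cyl_meas|exact: cyl_law].
have sub2 : <<s setT, cylinders >> `<=` <<s setT, Gpi >>.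
  apply: smallest_sub; first exact: smallest_sigma_algebra.
  move=> C [n [v ->]]; apply: sub_gen_smallest; right; exists [:: n], (fun _ => v).
  apply/seteqP; split => I /=.
    by move=> h k; rewrite inE => /eqP ->.
  by move=> h; apply: h; rewrite inE.
by have [] := sub _ (sub2 _ mB).
Qed.

End Law.

Lemma null_eq d (T : measurableType d) (R : realType) (P : probability T R)
  (E F N : set T) : measurable E -> measurable F -> measurable N -> P N = 0%E ->
  E `\` N = F `\` N -> P E = P F.
Proof.
move=> mE mF mN N0 e.
have h : forall G, measurable G -> P G = P (G `\` N).
  move=> G mG; rewrite (measureDI P mG mN).
  rewrite (@subset_measure0 _ _ _ P (G `&` N) N) ?adde0 //.
  exact: measurableI.
by rewrite (h _ mE) (h _ mF) e.
Qed.

Unset Implicit Arguments. Set Strict Implicit.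

Theorem propositionA1 (R : realType) (f : int * int -> R)
  (hf : in_fin2_simplex f)
  (d : measure_display) (T : measurableType d) (P : probability T R)
  (X : nat -> T -> int * int)
  (hXmeas : forall k v, measurable (X k @^-1` [set v]))
  (hXdom : forall k w, fin2_dom (X k w))
  (hXlaw : forall k p, fin2_dom p -> P (X k @^-1` [set p]) = (f p)%:E)
  (hXind : mutually_independent P X) :
  forall (s sinv : nat -> nat), cancel s sinv -> cancel sinv s ->
  forall A : set iproc, network_event A ->
    P [set w | A (fun i => calX (fun k => X k w) (sinv i))] =
    P [set w | A (calX (fun k => X k w))].
Proof.
move=> s sinv hs hsi A [mA invA].
have mA' : measurable (A : set MI) by [].
pose BadN (n : nat) := \bigcup_m oapp (fun p => if good p then set0 else X n @^-1` [set p])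
   set0 (unpickle m).
have negl : P.-negligible (\bigcup_n BadN n).
  apply: negligible_bigcup => n; apply: negligible_bigcup => m.
  case: (unpickle m) => [p|] /=; last by exists set0; split.
  case: ifP => gp; first by exists set0; split.
  exists (X n @^-1` [set p]); split => //.
  have [dp|ndp] := pselect (fin2_dom p); last first.
    rewrite (_ : X n @^-1` [set p] = set0); first exact: measure0.
    by apply/seteqP; split => // w /= h; apply: ndp; rewrite -h.
  rewrite hXlaw //.
  case: p gp dp => a b; rewrite /good /fin2_dom /= => gp [h1 h2].
  have ea : a = -1 by lia.
  have hb : b != 0 by apply/negP => /eqP eb; move: gp; rewrite ea eb.
  by subst a; rewrite hf.2.1 //; lia.
have [N [mN N0 sN]] := negl.
have goodw : forall w, ~ N w -> forall n, good (X n w).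
  move=> w nw n; apply: contrapT => ng; apply: nw; apply: sN.
  exists n => //; exists (pickle (X n w)) => //=; rewrite pickleK /=.
  by have -> : good (X n w) = false by apply/negP.
set B0 : set MI := calX @^-1` A.
have mB0 : measurable B0 by rewrite -[B0]setTI; exact: calX_measfun.
have mE1 : measurable [set w | A (fun i => calX (fun k => X k w) (sinv i))].
  apply: (pre_meas (g := fun w => (fun i => calX (fun k => X k w) (sinv i)) : MI)) => //.
  apply: meas_fun_of => n v; exact: (calX_meas hXmeas).
rewrite (_ : [set w | A (calX (fun k => X k w))] = Psi X @^-1` B0) //.
rewrite (law_eq hXmeas hXdom hXlaw hXind hsi mB0).
apply: (null_eq mE1 _ mN N0).
  apply: pre_meas mB0; exact: Psis_meas.
apply/seteqP; split => w [h nw]; split => //.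
  rewrite /B0 /Psis /preimage /=.
  by apply/(invA _ _ (net_perm (goodw w nw) hs hsi)).
by apply/(invA _ _ (net_perm (goodw w nw) hs hsi)).
Qed.
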